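(* Let $n$ and $r$ be positive integers with $\frac{25}{9}r-1\le n<\frac{14}{5}r-1$. Then $\rho_2(K(n,r))=4$.
   Context: For integers $n\ge 2r$, the Kneser graph $K(n,r)$ has as vertices the $r$-element subsets of $[n]=\{1,\dots,n\}$, two vertices being adjacent iff they are disjoint. A $2$-packing of a graph $G$ is a set of vertices pairwise at distance at least $3$ in $G$; $\rho_2(G)$ is the maximum cardinality of a $2$-packing. *)

(* Defs.v *)
From mathcomp Require Import all_boot.
Set Implicit Arguments. Unset Strict Implicit. Unset Printing Implicit Defensive.

Definition kvertex (n r : nat) (A : {set 'I_n}) : bool := #|A| == r.

Definition kadj (n r : nat) (A B : {set 'I_n}) : bool :=
  [&& kvertex r A, kvertex r B & [disjoint A & B]].

Definition kdist_ge3 (n r : nat) (A B : {set 'I_n}) : bool :=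
  [&& A != B, ~~ kadj r A B & ~~ [exists C : {set 'I_n}, kadj r A C && kadj r C B]].

Definition two_packing (n r : nat) (P : {set {set 'I_n}}) : bool :=
  [forall A in P, kvertex r A] &&
  [forall A in P, forall B in P, (A != B) ==> kdist_ge3 r A B].

Definition rho2_eq (n r k : nat) : Prop :=
  (exists P : {set {set 'I_n}}, two_packing r P /\ #|P| = k) /\
  (forall P : {set {set 'I_n}}, two_packing r P -> #|P| <= k).

(* Main.v *)
Require Import Defs.
From mathcomp Require Import all_boot zify.

Lemma subset_card (T : finType) (A : {set T}) k :
  k <= #|A| -> exists2 B : {set T}, B \subset A & #|B| = k.
Proof.
elim: k => [|k IH] Hk; first by exists set0; rewrite ?sub0set ?cards0.
have [B BA cB] := IH (ltnW Hk).
have : 0 < #|A :\: B| by rewrite cardsD (setIidPr BA) cB subn_gt0.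
case/card_gt0P => x; rewrite in_setD => /andP [xB xA].
exists (x |: B); first by rewrite subUset sub1set xA BA.
by rewrite cardsU1 xB cB.
Qed.

Lemma dist3 n r (A B : {set 'I_n}) : kvertex r A -> kvertex r B ->
  kdist_ge3 r A B = [&& A != B, 0 < #|A :&: B| & n + #|A :&: B| < 3 * r].
Proof.
rewrite /kvertex => /eqP cA /eqP cB.
rewrite /kdist_ge3 /kadj /kvertex cA cB !eqxx /= -setI_eq0 card_gt0.
congr [&& _, _ & _].
have UI := cardsUI A B; rewrite cA cB in UI.
apply/idP/idP.
- move=> H; rewrite ltnNge; apply/negP => Hle.
  have Hc : r <= #|~: (A :|: B)|.
    have := cardsC (A :|: B); rewrite card_ord => HC. move: UI Hle HC; move: #|A :|: B| #|A :&: B| #|~: (A :|: B)| => a b c; lia.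
  have [C CS cC] := @subset_card _ _ _ Hc.
  move/negP: H; apply; apply/existsP; exists C.
  rewrite cC eqxx /=.
  apply/andP; split; rewrite -setI_eq0; apply/eqP/setP => x; rewrite !inE;
    apply/negbTE; apply/negP => /andP [h1 h2]; have := subsetP CS x;
    rewrite !inE; [rewrite h2 | rewrite h1]; rewrite ?orbT /=; move/(_ isT)=> //=.
    by rewrite h1.
  by rewrite h2 orbT.
- move=> H; apply/negP => /existsP [C /and3P [/andP [/eqP cC dAC] _ dCB]].
  have dU : [disjoint C & A :|: B].
    rewrite -setI_eq0 setIUr; apply/eqP.
    move: dAC dCB; rewrite -!setI_eq0 => /eqP h1 /eqP h2.
    by rewrite setIC h1 h2 setU0.
  have := cardsUI C (A :|: B); move: dU; rewrite -setI_eq0 => /eqP ->.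
  rewrite cards0 addn0 => h.
  have := max_card (C :|: (A :|: B)); rewrite card_ord => hm.
  move: h hm UI H cC; move: #|C :|: (A :|: B)| #|A :|: B| #|A :&: B| #|C| => a b c d; lia.
Qed.

Lemma sum_ind (n : nat) (A : {set 'I_n}) : \sum_(x : 'I_n) (x \in A : nat) = #|A|.
Proof.
rewrite -sum1_card [RHS]big_mkcond /=; apply: eq_bigr => x _; by case: (x \in A).
Qed.

Lemma sq3 m : 3 * m <= 2 + m * m.
Proof. case: m => [|[|[|k]]] //; nia. Qed.

Lemma count_bound n r t (Q : {set {set 'I_n}}) :
 (forall A, A \in Q -> #|A| = r) ->
 (forall A B, A \in Q -> B \in Q -> A != B -> #|A :&: B| <= t) ->
 3 * (#|Q| * r) <= 2 * n + #|Q| * (r + (#|Q|).-1 * t).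
Proof.
move=> cQ iQ.
pose d (x : 'I_n) := \sum_(A in Q) (x \in A : nat).
have S1 : \sum_x d x = #|Q| * r.
  rewrite /d exchange_big /= -sum_nat_const; apply: eq_bigr => A AQ.
  by rewrite sum_ind cQ.
have S2 : \sum_x d x * d x = \sum_(A in Q) \sum_(B in Q) #|A :&: B|.
  rewrite /d; under eq_bigr => x _ do rewrite big_distrlr /=.
  rewrite exchange_big /=; apply: eq_bigr => A _.
  rewrite exchange_big /=; apply: eq_bigr => B _.
  rewrite -sum_ind; apply: eq_bigr => x _; rewrite inE.
  by case: (x \in A); case: (x \in B).
have S3 : \sum_(A in Q) \sum_(B in Q) #|A :&: B| <= #|Q| * (r + (#|Q|).-1 * t).
  rewrite -sum_nat_const; apply: leq_sum => A AQ.
  rewrite (bigD1 A) //= setIid cQ // leq_add2l.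
  apply: leq_trans (_ : \sum_(B in Q :\ A) t <= _).
    rewrite [X in X <= _]big_mkcond [X in _ <= X]big_mkcond /=; apply: leq_sum => B _.
    rewrite !inE andbC; case: ifP => // /andP [BQ BA].
    by apply: iQ => //; rewrite eq_sym.
  by rewrite sum_nat_const (cardsD1 A Q) AQ.
have P : 3 * \sum_x d x <= 2 * n + \sum_x d x * d x.
  have -> : 2 * n = \sum_(x < n) 2 by rewrite big_const_ord iter_addn_0 mulnC.
  rewrite -big_split big_distrr; apply: leq_sum => x _.
  exact: sq3.
rewrite S2 S1 in P.
apply: leq_trans P _; rewrite leq_add2l; exact: S3.
Qed.

Definition inP (k i : nat) : bool :=
  match k with
  | 0 => (i == 0) || (i == 1)
  | 1 => (i == 0) || (i == 2)
  | 2 => (i == 0) || (i == 3)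
  | 3 => (i == 1) || (i == 2)
  | 4 => (i == 1) || (i == 3)
  | _ => (i == 2) || (i == 3)
  end.

Lemma sumP6 (i j : 'I_4) :
  \sum_(k < 6) ((inP k i && inP k j) : nat) = if i == j then 3 else 1.
Proof.
rewrite !big_ord_recr big_ord0 /=.
by case: i j => [[|[|[|[|?]]]] ?] [[|[|[|[|?]]]] ?].
Qed.

Lemma sumP4 (i j : 'I_4) :
  \sum_(l < 4) (((l == i :> nat) && (l == j :> nat)) : nat) = if i == j then 1 else 0.
Proof.
rewrite !big_ord_recr big_ord0 /=.
by case: i j => [[|[|[|[|?]]]] ?] [[|[|[|[|?]]]] ?].
Qed.

Lemma card_setP (T : finType) (P : pred T) : #|[set u | P u]| = \sum_u (P u : nat).
Proof.
rewrite -sum1_card [LHS]big_mkcond /=; apply: eq_bigr => x _; rewrite inE; by case: (P x).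
Qed.

Notation U t p := ('I_6 * 'I_t + 'I_4 * 'I_p)%type.

Section Constr.
Variables t p : nat.
Definition memU (i : nat) (u : U t p) : bool :=
  match u with inl (k, _) => inP k i | inr (l, _) => l == i :> nat end.
Definition S (i : 'I_4) : {set U t p} := [set u | memU i u].

Lemma cardS (i j : 'I_4) : #|S i :&: S j| = if i == j then 3 * t + p else t.
Proof.
have -> : S i :&: S j = [set u | memU i u && memU j u].
  by apply/setP => u; rewrite !inE.
rewrite card_setP big_sumType /=.
have -> : \sum_(u : 'I_6 * 'I_t) ((memU i (inl u) && memU j (inl u)) : nat)
   = \sum_(k < 6) \sum_(s < t) ((inP k i && inP k j) : nat).
  by rewrite pair_bigA; apply: eq_bigr => -[k s].
have -> : \sum_(u : 'I_4 * 'I_p) ((memU i (inr u) && memU j (inr u)) : nat)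
   = \sum_(l < 4) \sum_(s < p) (((l == i :> nat) && (l == j :> nat)) : nat).
  by rewrite pair_bigA; apply: eq_bigr => -[k s].
under eq_bigr => k _ do rewrite big_const_ord iter_addn_0.
under [X in _ + X]eq_bigr => k _ do rewrite big_const_ord iter_addn_0.
rewrite -!big_distrl /= sumP6 sumP4.
case: (i == j); lia.
Qed.
End Constr.

Theorem corollary4p10 (n r : nat) :
  0 < n -> 0 < r -> 25 * r <= 9 * (n + 1) -> 5 * (n + 1) < 14 * r ->
  rho2_eq n r 4.
Proof.
move=> n0 r0 h1 h2.
pose t := 3 * r - n - 1. pose p := r - 3 * t.
have ht : 1 <= t by rewrite /t; lia.
have hr : 3 * t + p = r by rewrite /p /t; lia.
have hn : n + t < 3 * r by rewrite /t; lia.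
have hU : #|{: U t p}| <= n by rewrite card_sum !card_prod !card_ord /p /t; lia.
pose f (u : U t p) : 'I_n := widen_ord hU (enum_rank u).
have finj : injective f.
  by move=> x y /(congr1 val) /= /val_inj /enum_rank_inj.
pose A (i : 'I_4) := f @: S t p i.
have cA i j : #|A i :&: A j| = if i == j then r else t.
  by rewrite -imsetI ?card_imset ?cardS ?hr //; apply: in2W.
have cAA i : #|A i| = r by rewrite -(setIid (A i)) cA eqxx.
have Ainj : injective A.
  move=> i j e; apply/eqP; apply: contraTT isT => ne.
  have := cA i j; rewrite (negbTE ne) e setIid cAA; lia.
split.
- exists (A @: setT); split; last by rewrite card_imset // cardsT card_ord.
  apply/andP; split; apply/forallP => B; apply/implyP => /imsetP [i _ ->].
    by rewrite /kvertex cAA.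
  apply/forallP => C; apply/implyP => /imsetP [j _ ->]; apply/implyP => ne.
  have ij : i != j by apply: contraNneq ne => ->.
  rewrite dist3 ?/kvertex ?cAA // ne cA (negbTE ij) /=.
  apply/andP; split => //.
- move=> P /andP [/forallP hv /forallP hd]; rewrite leqNgt; apply/negP => h5.
  have [Q QP cQ] := @subset_card _ P 5 h5.
  have : 3 * (#|Q| * r) <= 2 * n + #|Q| * (r + (#|Q|).-1 * t).
    apply: count_bound.
      by move=> B BQ; apply/eqP; move/implyP: (hv B); apply; apply: (subsetP QP).
    move=> B C BQ CQ ne.
    have BP := subsetP QP B BQ; have CP := subsetP QP C CQ.
    have vB : kvertex r B by move/implyP: (hv B); apply.
    have vC : kvertex r C by move/implyP: (hv C); apply.
    move/implyP: (hd B) => /(_ BP) /forallP /(_ C) /implyP /(_ CP) /implyP /(_ ne).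
    rewrite dist3 // => /and3P [_ _].
    rewrite /t; lia.
  rewrite cQ /t; lia.
Qed.
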